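(* Let $\mathcal{H}$ be a complex separable Hilbert space and let $A = A^*$ be a bounded injective operator on $\mathcal{H}$ which is Hankel with respect to a pure isometry $V$ of multiplicity $N$, and suppose $AV > 0$. Let $A = J|A|$ be the polar decomposition of $A$, where $|A| = \sqrt{A^*A}$ and $J$ is a self-adjoint unitary. Then $|A| > 0$ is $W$-Hankel and doubly-positive, where $W = JV$. Moreover, if $W = W_0 \oplus U$ is the Wold decomposition of $W$ on $\mathcal{H} = \mathcal{H}_0 \oplus \mathcal{H}'$, with $W_0$ a pure isometry on $\mathcal{H}_0$ and $U$ unitary on $\mathcal{H}'$, then $W_0$ has multiplicity $N$, both $\mathcal{H}_0$ and $\mathcal{H}'$ are invariant under $|A|$, and either $U = I_{\mathcal{H}'}$ or $\mathcal{H}' = \{0\}$.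
   Context: For an isometry $V$, a bounded operator $A$ is $V$-Hankel if $V^*A = AV$; a positive semi-definite $A$ is $V$-Hankel and doubly-positive if it is $V$-Hankel and $AV = V^*A$ is positive semi-definite. For an operator $T$, $T>0$ means $T$ is positive semi-definite and injective. An isometry is pure if it is unitarily equivalent to the unilateral shift $M_z$ on $H^2\otimes\mathbb{C}^n$ for some $n \in \mathbb{N}\cup\{+\infty\}$; its multiplicity is $n = \dim(\mathrm{Ran}\, V)^\perp$. The Wold decomposition writes any isometry as an orthogonal direct sum of a pure isometry and a unitary. *)

(* Defs.v *)
From HB Require Import structures.
From mathcomp Require Import all_boot all_order all_algebra.
From mathcomp Require Import complex.
From mathcomp Require Import reals.
Set Implicit Arguments. Unset Strict Implicit. Unset Printing Implicit Defensive.
Import Order.TTheory GRing.Theory Num.Theory.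
Local Open Scope ring_scope.
Local Open Scope complex_scope.

Section Hilbert.
Variable R : realType.
Variable H : lmodType R[i].
Variable ip : H -> H -> R[i].   (* inner product, linear in the first argument *)

Definition hnorm (x : H) : R := Num.sqrt (complex.Re (ip x x)).

Definition cvg_to (u : nat -> H) (l : H) : Prop :=
  forall e : R, 0 < e -> exists N, forall n, (N <= n)%N -> hnorm (u n - l) < e.

Definition cauchy_seq (u : nat -> H) : Prop :=
  forall e : R, 0 < e -> exists N, forall n m, (N <= n)%N -> (N <= m)%N ->
    hnorm (u n - u m) < e.

Definition is_sep_hilbert : Prop :=
  (forall (a : R[i]) x y z, ip (a *: x + y) z = a * ip x z + ip y z) /\
  (forall x y, ip y x = (ip x y)^*) /\
  (forall x, 0 <= ip x x) /\
  (forall x, ip x x = 0 -> x = 0) /\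
  (forall u, cauchy_seq u -> exists l, cvg_to u l) /\
  (exists d : nat -> H, forall x (e : R), 0 < e -> exists n, hnorm (x - d n) < e).

Definition lin_op (T : H -> H) : Prop :=
  forall (a : R[i]) x y, T (a *: x + y) = a *: T x + T y.

Definition bounded_op (T : H -> H) : Prop :=
  lin_op T /\ exists M : R, forall x, hnorm (T x) <= M * hnorm x.

Definition is_adjoint (T S : H -> H) : Prop :=
  forall x y, ip (T x) y = ip x (S y).

Definition selfadjoint (T : H -> H) : Prop := is_adjoint T T.

(* positive semi-definite: <Tx,x> >= 0 (in the order of R[i], i.e. real and >= 0) *)
Definition psd (T : H -> H) : Prop := forall x, 0 <= ip (T x) x.

(* T > 0 : positive semi-definite and injective *)
Definition pos_inj (T : H -> H) : Prop := psd T /\ injective T.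

Definition isom_op (V : H -> H) : Prop :=
  lin_op V /\ forall x y, ip (V x) (V y) = ip x y.

Definition unitary_op (U : H -> H) : Prop :=
  isom_op U /\ forall y, exists x, U x = y.

(* V-Hankel (Vs being the adjoint of V): V^* A = A V *)
Definition hankel (V Vs A : H -> H) : Prop := forall x, Vs (A x) = A (V x).

Definition hankel_dpos (V Vs A : H -> H) : Prop :=
  psd A /\ hankel V Vs A /\ psd (A \o V).

Definition closed_subspace (S : H -> Prop) : Prop :=
  [/\ S 0,
      (forall (a : R[i]) x y, S x -> S y -> S (a *: x + y)) &
      (forall u l, (forall n, S (u n)) -> cvg_to u l -> S l)].

Definition orthocompl (S : H -> Prop) : H -> Prop :=
  fun x => forall y, S y -> ip x y = 0.

Definition inv_sub (T : H -> H) (S : H -> Prop) : Prop :=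
  forall x, S x -> S (T x).

Definition pure_on (V : H -> H) (S : H -> Prop) : Prop :=
  forall x, (forall n, exists y, S y /\ x = iter n V y) -> x = 0.

Definition onto_on (V : H -> H) (S : H -> Prop) : Prop :=
  forall y, S y -> exists x, S x /\ V x = y.

(* wandering subspace S ⊖ V S of V restricted to the inv_sub subspace S;
   its (Hilbert) dimension is the multiplicity of V|S *)
Definition wandering (V : H -> H) (S : H -> Prop) : H -> Prop :=
  fun x => S x /\ forall y, S y -> ip x (V y) = 0.

Definition same_dim (S1 S2 : H -> Prop) : Prop :=
  exists f : H -> H, [/\ lin_op f,
    (forall x, S1 x -> S2 (f x)),
    (forall x y, S1 x -> S1 y -> ip (f x) (f y) = ip x y) &
    (forall y, S2 y -> exists x, S1 x /\ f x = y)].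

End Hilbert.

(* Main.v *)
Require Import Defs.
From HB Require Import structures.
From mathcomp Require Import all_boot all_order all_algebra.
From mathcomp Require Import complex.
From mathcomp Require Import reals.
From mathcomp Require Import ring lra.
From mathcomp Require Import boolp classical_sets.
Import Order.TTheory GRing.Theory Num.Theory.
Local Open Scope ring_scope.
Set Implicit Arguments. Unset Strict Implicit. Unset Printing Implicit Defensive.
Notation RE := complex.Re.
Notation IM := complex.Im.

Section Basic.
Variable R : realType.

Lemma ReD (z w : R[i]) : RE (z + w) = RE z + RE w.
Proof. by case: z => ? ?; case: w => ? ?. Qed.
Lemma ImD (z w : R[i]) : IM (z + w) = IM z + IM w.
Proof. by case: z => ? ?; case: w => ? ?. Qed.
Lemma ReN (z : R[i]) : RE (- z) = - RE z.
Proof. by case: z => ? ?. Qed.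
Lemma ImN (z : R[i]) : IM (- z) = - IM z.
Proof. by case: z => ? ?. Qed.
Lemma ReJ (z : R[i]) : RE (z^*%C) = RE z.
Proof. by case: z => ? ?. Qed.
Lemma ReM_real (t : R) (z : R[i]) : RE (t%:C%C * z) = t * RE z.
Proof. case: z => a b /=. by rewrite !mul0r subr0. Qed.
Lemma ImM_real (t : R) (z : R[i]) : IM (t%:C%C * z) = t * IM z.
Proof. case: z => a b /=. by rewrite !mul0r addr0. Qed.
Lemma cjD (z w : R[i]) : (z + w)^*%C = z^*%C + w^*%C.
Proof. case: z => ? ?; case: w => ? ? /=. by rewrite /conjc /= opprD. Qed.
Lemma cjN (z : R[i]) : (- z)^*%C = - z^*%C.
Proof. by case: z => ? ?. Qed.
Lemma cjM (z w : R[i]) : (z * w)^*%C = z^*%C * w^*%C.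
Proof. case: z => a b; case: w => c d /=. rewrite /conjc /=. by simpc. Qed.
Lemma ge0_ReIm (z : R[i]) : 0 <= z -> IM z = 0 /\ 0 <= RE z.
Proof. rewrite lecE => /andP [/eqP h1 h2]. by []. Qed.
Lemma eq0_ReIm (z : R[i]) : RE z = 0 -> IM z = 0 -> z = 0.
Proof. case: z => a b /= -> ->. by []. Qed.
Lemma ReIm_ge0 (z : R[i]) : IM z = 0 -> 0 <= RE z -> 0 <= z.
Proof. move=> h1 h2. rewrite lecE h1 eqxx /=. by []. Qed.
Lemma Re_i (z : R[i]) : RE (('i%C)^*%C * z) = IM z.
Proof. case: z => a b /=. by rewrite mul0r sub0r mulN1r opprK. Qed.
End Basic.

Lemma quad0 (R : realType) (r b : R) : 0 <= b -> (forall t : R, 0 <= 2 * t * r + t ^+ 2 * b) -> r = 0.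
Proof.
move=> b0 h.
set u := (b + 1)^-1.
have u0 : 0 < u by rewrite invr_gt0; lra.
have ub : u * (b + 1) = 1 by rewrite mulVf //; apply/eqP; lra.
have := h (- r * u).
have -> : 2 * (- r * u) * r + (- r * u) ^+ 2 * b = - (r ^+ 2) * u * (1 + u).
  have eb : u * b = 1 - u by rewrite -ub; ring.
  rewrite [_ ^+ 2]expr2.
  transitivity (-2 * r * r * u + r * r * u * (u * b)); first by ring.
  rewrite eb; ring.
move=> hh.
have : r ^+ 2 <= 0.
  have p : 0 < u * (1 + u) by apply: mulr_gt0 => //; lra.
  rewrite -(pmulr_lle0 _ p). nra.
move=> h2. apply/eqP; rewrite -sqrf_eq0 eq_le h2 sqr_ge0 //.
Qed.


Section Seq.
Variable R : realType.
Implicit Types g : nat -> R.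
Definition convex_seq g := forall k, 0 <= g k - 2 * g k.+1 + g k.+2.
Lemma conv_mono g : convex_seq g -> forall n, g 1 - g 0 <= g n.+1 - g n.
Proof.
move=> hc; elim => [|n IH]; first lra.
have := hc n. lra.
Qed.
Lemma conv_lb g : convex_seq g -> forall n, g 0 + n%:R * (g 1 - g 0) <= g n.
Proof.
move=> hc; elim => [|n IH]; first by rewrite mul0r addr0.
have := conv_mono hc n. rewrite -addn1 natrD mulrDl mul1r. lra.
Qed.
Lemma conv_back g : convex_seq g -> forall n, g n - n%:R * (g n.+1 - g n) <= g 0.
Proof.
move=> hc.
have h : forall n, g n - g 0 <= n%:R * (g n.+1 - g n).
  elim => [|n IH]; first by rewrite mul0r subrr.
  have := hc n. have : 0 <= n%:R :> R by rewrite ler0n.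
  move: IH. rewrite -addn1 natrD.
  move: (n%:R : R) => nn. nra.
move=> n; have := h n; lra.
Qed.
Lemma archi_le0 (c B : R) : (forall n : nat, 0 < c -> n%:R * c <= B) -> c <= 0.
Proof.
move=> h; rewrite leNgt; apply/negP => c0.
have x0 : 0 <= `|B| / c by apply: divr_ge0 => //; exact: ltW.
have [N hN] : exists N : nat, `|B| / c < N%:R  by eexists; exact: (archi_boundP x0).
have := h N c0. rewrite ltr_pdivrMr // in hN. have := ler_norm B. lra.
Qed.
End Seq.

Section Hilb.
Variable R : realType.
Variable H : lmodType R[i].
Variable ip : H -> H -> R[i].
Hypothesis hH : is_sep_hilbert ip.

Lemma ipDl a x y z : ip (a *: x + y) z = a * ip x z + ip y z.
Proof. by case: hH => h _; apply: h. Qed.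
Lemma ipC x y : ip y x = (ip x y)^*%C.
Proof. by case: hH => _ [h _]; apply: h. Qed.
Lemma ip_ge0 x : 0 <= ip x x.
Proof. by case: hH => _ [_ [h _]]; apply: h. Qed.
Lemma ip_eq0 x : ip x x = 0 -> x = 0.
Proof. by case: hH => _ [_ [_ [h _]]]; apply: h. Qed.

Lemma ip0l z : ip 0 z = 0.
Proof.
have := ipDl 1 0 0 z. rewrite scaler0 addr0 mul1r => /eqP.
by rewrite -subr_eq0 opprD addrA subrr sub0r oppr_eq0 => /eqP.
Qed.
Lemma ipAl x y z : ip (x + y) z = ip x z + ip y z.
Proof. by have := ipDl 1 x y z; rewrite scale1r mul1r. Qed.
Lemma ipZl a x z : ip (a *: x) z = a * ip x z.
Proof. by have := ipDl a x 0 z; rewrite addr0 ip0l addr0. Qed.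
Lemma ipNl x z : ip (- x) z = - ip x z.
Proof. by rewrite -scaleN1r ipZl mulN1r. Qed.
Lemma ipBl x y z : ip (x - y) z = ip x z - ip y z.
Proof. by rewrite ipAl ipNl. Qed.
Lemma ip0r z : ip z 0 = 0.
Proof. by rewrite ipC ip0l conjc0. Qed.
Lemma ipAr x y z : ip z (x + y) = ip z x + ip z y.
Proof. by rewrite ipC ipAl cjD -!ipC. Qed.
Lemma ipNr x z : ip z (- x) = - ip z x.
Proof. by rewrite ipC ipNl cjN -ipC. Qed.
Lemma ipBr x y z : ip z (x - y) = ip z x - ip z y.
Proof. by rewrite ipAr ipNr. Qed.
Lemma ipZr a x z : ip z (a *: x) = a^*%C * ip z x.
Proof. by rewrite ipC ipZl cjM -ipC. Qed.

Lemma ip_ext a b : (forall y, ip a y = ip b y) -> a = b.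
Proof. move=> h; apply/eqP; rewrite -subr_eq0; apply/eqP/ip_eq0. by rewrite ipBl h subrr. Qed.
Lemma ip_extr a b : (forall y, ip y a = ip y b) -> a = b.
Proof. move=> h; apply/ip_ext => y. by rewrite ipC h -ipC. Qed.
Lemma ip_orth0 a : (forall y, ip a y = 0) -> a = 0.
Proof. move=> h; apply: ip_eq0; exact: h. Qed.

Definition q x := RE (ip x x).
Lemma q_ge0 x : 0 <= q x.
Proof. by case: (ge0_ReIm (ip_ge0 x)). Qed.
Lemma q_eq0 x : q x = 0 -> x = 0.
Proof. move=> h; apply: ip_eq0; apply: eq0_ReIm => //. by case: (ge0_ReIm (ip_ge0 x)). Qed.
Lemma RE_ipC x y : RE (ip y x) = RE (ip x y).
Proof. by rewrite ipC ReJ. Qed.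
Lemma qD x y : q (x + y) = q x + 2 * RE (ip x y) + q y.
Proof. rewrite /q ipAl !ipAr !ReD. rewrite [RE (ip y x)]RE_ipC. lra. Qed.
Lemma qB x y : q (x - y) = q x - 2 * RE (ip x y) + q y.
Proof. rewrite /q ipBl !ipBr !(ReD, ReN) [RE (ip y x)]RE_ipC. lra. Qed.
Lemma qpar_gen a b : q (a - b) + q (a + b) = 2 * q a + 2 * q b.
Proof. rewrite qB qD. lra. Qed.
Lemma qZ (t : R) x : q (t%:C%C *: x) = t ^+ 2 * q x.
Proof. rewrite /q ipZl ipZr conjc_real mulrA -rmorphM ReM_real. by rewrite expr2. Qed.
Lemma hnorm_sq x : hnorm ip x ^+ 2 = q x.
Proof. rewrite /hnorm sqr_sqrtr //. exact: q_ge0. Qed.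

Section Lin.
Variable T : H -> H.
Hypothesis hT : lin_op T.
Lemma linD x y : T (x + y) = T x + T y.
Proof. by have := hT 1 x y; rewrite !scale1r. Qed.
Lemma lin0 : T 0 = 0.
Proof. have := linD 0 0. rewrite addr0 => /eqP. by rewrite -subr_eq0 opprD addrA subrr sub0r oppr_eq0 => /eqP. Qed.
Lemma linZ a x : T (a *: x) = a *: T x.
Proof. by have := hT a x 0; rewrite !addr0 lin0 addr0. Qed.
Lemma linN x : T (- x) = - T x.
Proof. by rewrite -scaleN1r linZ scaleN1r. Qed.
Lemma linB x y : T (x - y) = T x - T y.
Proof. by rewrite linD linN. Qed.
End Lin.

Lemma CS2 (s : R) a b : 2 * s * RE (ip a b) <= s ^+ 2 * q a + q b.
Proof.
have := q_ge0 (s%:C%C *: a - b). rewrite qB qZ /q ipZl ReM_real. lra.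
Qed.

Lemma psd_zero (T : H -> H) w : lin_op T -> psd ip T -> selfadjoint ip T ->
  ip (T w) w = 0 -> T w = 0.
Proof.
move=> hl hp hs h0.
set y := T w.
have hq : q y = 0.
  apply: (@quad0 _ (q y) (RE (ip (T y) y))).
    by case: (ge0_ReIm (hp y)).
  move=> t.
  have := hp (w + t%:C%C *: y).
  move/ge0_ReIm => [_].
  rewrite (linD hl) (linZ hl) !ipAl !ipAr !ipZl !ipZr conjc_real h0.
  rewrite (hs y w) -/y.
  rewrite !(ReD, ReM_real, mulrA) /q expr2 (_ : RE 0 = 0) //. lra.
exact: q_eq0.
Qed.

Lemma hn_lt v (e : R) : 0 < e -> q v < e ^+ 2 -> hnorm ip v < e.
Proof.
move=> e0 h. rewrite /hnorm -/(q v) -(gtr0_norm e0) -sqrtr_sqr ltr_sqrt //.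
by rewrite exprn_gt0.
Qed.
Lemma lt_hn v (e : R) : hnorm ip v < e -> q v < e ^+ 2.
Proof.
move=> h. rewrite -hnorm_sq. have h0 : 0 <= hnorm ip v by rewrite /hnorm sqrtr_ge0.
rewrite !expr2. nra.
Qed.

Lemma inv_mono (n k : nat) : (k <= n)%N -> n.+1%:R^-1 <= k.+1%:R^-1 :> R.
Proof. move=> kn. rewrite lef_pV2 ?posrE // ler_nat ltnS. by []. Qed.
Lemma inv_pos (n : nat) : 0 < n.+1%:R^-1 :> R.
Proof. by rewrite invr_gt0 ltr0n. Qed.

Lemma sub_comb (S : H -> Prop) : closed_subspace ip S ->
  forall a x y, S x -> S y -> S (a *: x + y).
Proof. by case. Qed.
Lemma sub0 (S : H -> Prop) : closed_subspace ip S -> S 0.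
Proof. by case. Qed.
Lemma subZ (S : H -> Prop) : closed_subspace ip S -> forall a x, S x -> S (a *: x).
Proof. move=> hS a x hx. rewrite -(addr0 (a *: x)). apply: sub_comb => //. exact: sub0. Qed.
Lemma subD (S : H -> Prop) : closed_subspace ip S -> forall x y, S x -> S y -> S (x + y).
Proof. move=> hS x y hx hy. rewrite -(scale1r x). exact: sub_comb. Qed.

Lemma proj_thm (S : H -> Prop) : closed_subspace ip S ->
  (forall u, cauchy_seq ip u -> exists l, cvg_to ip u l) ->
  forall y, exists a, S a /\ forall h, S h -> ip (y - a) h = 0.
Proof.
move=> hS hcomp y.
pose E : set R := fun r => exists h, S h /\ r = q (y - h).
have E0 : E (q (y - 0)) by exists 0; split => //; exact: sub0.
have Elb : lbound E 0 by move=> r [h [_ ->]]; exact: q_ge0.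
have hinf : has_inf E by split; [exists (q (y - 0)) | exists 0].
set d := inf E.
have dle : forall h, S h -> d <= q (y - h).
  move=> h hh. apply: ge_inf; first by exists 0.
  by exists h.
have : forall n : nat, exists h, S h /\ q (y - h) < d + n.+1%:R^-1.
  move=> n. have [e [h [hh ->]] he] := inf_adherent (inv_pos n) hinf.
  by exists h.
move=> /choice [hs Hs].
have hc : (2^-1)%:C%C + (2^-1)%:C%C = 1 :> R[i].
  apply/eqP; rewrite eq_complex /= addr0 eqxx andbT. apply/eqP. 
  lra.
have par : forall n m, q (hs n - hs m) <= 2 * n.+1%:R^-1 + 2 * m.+1%:R^-1.
  move=> n m.
  have [Sn qn] := Hs n. have [Sm qm] := Hs m.
  set a := y - hs m; set b := y - hs n.
  have eab : a - b = hs n - hs m.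
    by rewrite /a /b opprB addrC addrA subrK.
  set mid := (2^-1)%:C%C *: (hs n + hs m).
  have Smid : S mid by apply: subZ => //; apply: subD.
  have emid : y - mid = (2^-1)%:C%C *: (a + b).
    rewrite /mid /a /b !scalerDr !scalerN addrACA -scalerDl hc scale1r -opprD (addrC (_ *: hs m)). by [].
  have qpar : q (a - b) + q (a + b) = 2 * q a + 2 * q b by apply: qpar_gen.
  have qm2 : q (y - mid) = 2^-1 ^+ 2 * q (a + b) by rewrite emid qZ.
  have := dle _ Smid. rewrite -eab. 
  have i4 : 2^-1 ^+ 2 * 4 = 1 :> R.
    have h2 : (2:R) != 0 by apply: lt0r_neq0; lra.
    rewrite expr2 -mulrA (_ : 4 = 2 * 2); last lra. by rewrite (mulrA _ 2) mulVf // mul1r mulVf.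
  have qab : q (a + b) = 4 * q (y - mid) by rewrite qm2 mulrA (mulrC 4) i4 mul1r.
  rewrite -/a -/b in qn qm. move=> hd.
  move: (n.+1%:R^-1) (m.+1%:R^-1) qn qm => en em qn qm.
  move: (q a) (q b) (q (a - b)) (q (a + b)) (q (y - mid)) qn qm qab qpar hd => qa qb qab' qapb qym. lra.
have cau : cauchy_seq ip hs.
  move=> e e0.
  have e40 : 0 < e ^+ 2 / 4 by apply: divr_gt0; [apply: exprn_gt0 | lra].
  have [k hk] := ltr_add_invr e40.
  exists k => n m kn km. apply: hn_lt => //. have := par n m.
  have := inv_mono kn; have := inv_mono km.
  move: (n.+1%:R^-1) (m.+1%:R^-1) (k.+1%:R^-1) (q (hs n - hs m)) hk => en em ek qq hk.
  move: (e ^+ 2) e40 hk => E2 e40 hk. lra.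
have [l hl] := hcomp _ cau.
have Sl : S l.
  case: hS => _ _ hcl. apply: (hcl hs l) => // n. by case: (Hs n).
have d0 : 0 <= d by apply: lb_le_inf => //; exists (q (y - 0)).
have mini : q (y - l) <= d.
  apply/ler_addgt0Pr => eps eps0.
  set e := eps / (d + 4 + eps).
  have ee : e * (d + 4 + eps) = eps by rewrite /e mulfVK //; apply: lt0r_neq0; lra.
  have e0 : 0 < e by apply: divr_gt0 => //; lra.
  have e1 : e <= 1 by rewrite /e ler_pdivrMr; lra.
  have [N hN] := hl e e0.
  have [k hk] := ltr_add_invr e0.
  pose n := maxn N k.
  have A : q (y - hs n) < d + e.
    have := inv_mono (leq_maxr N k). case: (Hs n) => _.
    move: (n.+1%:R^-1) (k.+1%:R^-1) hk => en ek hk. lra.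
  have B : q (hs n - l) < e ^+ 2 by apply: lt_hn; apply: hN; exact: leq_maxl.
  have eq : y - l = (y - hs n) + (hs n - l) by rewrite addrA subrK.
  have C := CS2 e (y - hs n) (hs n - l).
  have qa0 := q_ge0 (y - hs n). have qb0 := q_ge0 (hs n - l).
  rewrite eq qD.
  move: (q (y - hs n)) (q (hs n - l)) (RE (ip (y - hs n) (hs n - l))) A B C qa0 qb0 => qa qb r A B C qa0 qb0.
  rewrite expr2 in B C.
  nra.
exists l; split => // h Sh.
set z := y - l.
have key : forall h, S h -> RE (ip z h) = 0.
  move=> h' Sh'.
  apply/eqP; rewrite -oppr_eq0; apply/eqP.
  apply: (@quad0 _ _ (q h') (q_ge0 h')) => t.
  have := dle (l + t%:C%C *: h').
  have -> : y - (l + t%:C%C *: h') = z - t%:C%C *: h' by rewrite opprD addrA.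
  rewrite qB qZ ipZr conjc_real ReM_real.
  have : S (l + t%:C%C *: h') by rewrite addrC; apply: sub_comb.
  move=> S' /(_ S'). move: (q z) mini (RE (ip z h')) (q h') => qz mini r qh. lra.
apply: eq0_ReIm; first exact: key.
have := key _ (subZ hS 'i%C Sh). by rewrite ipZr Re_i.
Qed.


Section Main.
Variables (A V Vs P J : H -> H).
Hypotheses (hA : bounded_op ip A) (hAsa : selfadjoint ip A) (hAinj : injective A)
  (hV : isom_op ip V) (hVs : is_adjoint ip V Vs)
  (hAhank : hankel V Vs A)
  (hAV : pos_inj ip (A \o V))
  (hP : bounded_op ip P) (hPsa : selfadjoint ip P) (hPpsd : psd ip P)
  (hPsq : forall x, P (P x) = A (A x))
  (hJ : unitary_op ip J) (hJsa : selfadjoint ip J)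
  (hAJP : forall x, A x = J (P x)).

Let W := J \o V.
Let Plin : lin_op P := hP.1.
Let Jlin : lin_op J := hJ.1.1.
Let Jiso : forall x y, ip (J x) (J y) = ip x y := hJ.1.2.
Let Vlin : lin_op V := hV.1.
Let Viso : forall x y, ip (V x) (V y) = ip x y := hV.2.

Lemma PJ y : P (J y) = J (P y).
Proof.
apply: ip_extr => x.
by rewrite -hPsa -hJsa -hAJP hAsa hAJP.
Qed.

Lemma Pinj : injective P.
Proof. move=> x1 x2 e. apply: hAinj; apply: hAinj. by rewrite -!hPsq e. Qed.

Lemma Wlin : lin_op W.
Proof. move=> a x y. by rewrite /W /= Vlin Jlin. Qed.
Lemma Wiso x y : ip (W x) (W y) = ip x y.
Proof. by rewrite /W /= Jiso Viso. Qed.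
Lemma Wadj a b : ip (W a) b = ip a (Vs (J b)).
Proof. by rewrite /W /= hJsa hVs. Qed.

Lemma shift z w : ip (P (W z)) w = ip (P z) (W w).
Proof.
rewrite /W /= PJ -hAJP -hAhank ipC -hVs -ipC hAJP. by rewrite hJsa.
Qed.

Lemma PW_psd x : 0 <= ip (P (W x)) x.
Proof. rewrite /W /= PJ -hAJP. exact: hAV.1. Qed.

Lemma P_hankel x : Vs (J (P x)) = P (W x).
Proof. by rewrite -hAJP hAhank hAJP /W /= PJ. Qed.

Lemma JJ y : J (J y) = y.
Proof. apply: ip_ext => b. by rewrite hJsa Jiso. Qed.

Lemma fixP y : Vs (J y) = y -> W y = y.
Proof.
move=> h. apply/eqP; rewrite -subr_eq0; apply/eqP; apply: q_eq0.
rewrite qB /q Wiso Wadj h. rewrite -/(q y). lra.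
Qed.

Definition G z a b := RE (ip (P (iter a W z)) (iter b W z)).
Lemma G_shift z a b : G z a b.+1 = G z a.+1 b.
Proof. by rewrite /G /= shift. Qed.
Lemma G_sum z a b : G z a b = G z (a + b) 0.
Proof.
elim: b a => [|b IH] a; first by rewrite addn0.
by rewrite G_shift IH addSnnS.
Qed.
Definition F z k := G z k 0.

Lemma F_conv z : convex_seq (F z).
Proof.
move=> k.
have [m [->|->]] : exists m : nat, (k = m + m)%N \/ (k = (m + m).+1)%N.
  elim: k => [|k [m [->|->]]]; first by exists 0; left.
    by exists m; right.
  by exists m.+1; left; rewrite addSn addnS.
- rewrite /F.
  have e1 : ((m + m).+1 = m.+1 + m)%N by rewrite addSn.
  have e2 : ((m + m).+2 = m.+1 + m.+1)%N by rewrite addSn addnS.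
  rewrite e2 e1 -!G_sum.
  set w := iter m W z.
  have := hPpsd (w - W w). move/ge0_ReIm => [_].
  rewrite (linB Plin) !ipBl !ipBr !(ReD, ReN).
  rewrite /G -/w /= -/w -shift.
  move: (RE (ip (P w) w)) (RE (ip (P (W w)) w)) (RE (ip (P (W w)) (W w))) => a b c. lra.
- rewrite /F.
  have e0 : ((m + m).+1 = m.+1 + m)%N by rewrite addSn.
  have e1 : ((m + m).+2 = m.+1 + m.+1)%N by rewrite addSn addnS.
  have e2 : ((m + m).+3 = m.+2 + m.+1)%N by rewrite !addSn addnS.
  rewrite e2 e1 e0 -!G_sum.
  set w := iter m W z.
  have := PW_psd (w - W w). move/ge0_ReIm => [_].
  rewrite (linB Wlin) (linB Plin) !ipBl !ipBr !(ReD, ReN).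
  rewrite /G -/w /= -/w -(shift (W w) w).
  move: (RE (ip (P (W w)) w)) (RE (ip (P (W (W w))) w)) (RE (ip (P (W w)) (W w))) (RE (ip (P (W (W w))) (W w))) => a b c d. lra.
Qed.

Lemma exp_even w : RE (ip (P (w - W w)) (w - W w)) =
  RE (ip (P w) w) - 2 * RE (ip (P (W w)) w) + RE (ip (P (W w)) (W w)).
Proof.
rewrite (linB Plin) !ipBl !ipBr !(ReD, ReN) -shift.
move: (RE (ip (P w) w)) (RE (ip (P (W w)) w)) (RE (ip (P (W w)) (W w))) => a b c. lra.
Qed.

Lemma q_iter n z : q (iter n W z) = q z.
Proof. elim: n => //= n IH. by rewrite /q Wiso. Qed.

Lemma P_bound : exists B, forall w, RE (ip (P w) w) <= B * q w.
Proof.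
have [M hM] := hP.2.
exists ((M ^+ 2 + 1) / 2) => w.
have := CS2 1 (P w) w. rewrite expr1n !mul1r mulr1.
have h1 := hM w.
have h0 : 0 <= hnorm ip (P w) by rewrite /hnorm sqrtr_ge0.
have h2 : hnorm ip (P w) ^+ 2 <= M ^+ 2 * q w.
  rewrite -hnorm_sq -exprMn. rewrite !expr2. nra.
rewrite hnorm_sq in h2.
move: (RE (ip (P w) w)) (q (P w)) (q w) h2 => r qp qw h2. lra.
Qed.

Lemma fixed_H' (H' : H -> Prop) : onto_on W H' -> forall x, H' x -> W x = x.
Proof.
move=> onto x Hx.
have : forall y, exists u, H' y -> H' u /\ W u = y.
  move=> y. case: (pselect (H' y)) => hy.
    have [u hu] := onto y hy. by exists u.
  by exists 0.
move=> /choice [pre Hpre].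
pose u n := iter n pre x.
have Hu : forall n, H' (u n) /\ iter n W (u n) = x.
  elim => [|n [IH1 IH2]]; first by split.
  have [h1 h2] := Hpre _ IH1.
  split; first by [].
  have -> : u n.+1 = pre (u n) by [].
  by rewrite iterSr h2.
have [B hB] := P_bound.
have F0 : F x 0 = RE (ip (P x) x) by [].
have F1 : F x 1 = RE (ip (P (W x)) x) by [].
have F2 : F x 2 = RE (ip (P (W x)) (W x)) by rewrite /F (_ : 2 = 1 + 1)%N // -G_sum.
have F0p : 0 <= F x 0 by rewrite F0; case: (ge0_ReIm (hPpsd x)).
have F1p : 0 <= F x 1 by rewrite F1; case: (ge0_ReIm (PW_psd x)).
have fwd : F x 2 - F x 1 <= 0.
  apply: (archi_le0 (B := B * q x)) => n c0.
  pose g k := F x k.+1.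
  have gc : convex_seq g by move=> k; exact: (F_conv x k.+1).
  have := conv_lb gc (n + n).+1.
  have -> : g (n + n).+1 = G x n.+1 n.+1 by rewrite /g /F (G_sum x n.+1 n.+1) addSn addnS.
  have hb : G x n.+1 n.+1 <= B * q x by rewrite /G -(q_iter n.+1 x); apply: hB.
  rewrite /g.
  have : n%:R <= (n + n).+1%:R :> R by rewrite ler_nat; apply: leq_trans (leq_addr _ _) (leqnSn _).
  move: (n%:R : R) ((n + n).+1%:R : R) (F x 1) (F x 2) F1p c0 hb => a b f1 f2 F1p c0 hb.
  nra.
have bwd : F x 0 - F x 1 <= 0.
  apply: (archi_le0 (B := B * q x)) => n c0.
  pose g k := F (u n) k.
  have := conv_back (F_conv (u n)) (n + n).
  have [Hn1 Hn2] := Hu n.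
  have -> : F (u n) (n + n) = F x 0 by rewrite F0 /F -G_sum /G Hn2.
  have -> : F (u n) (n + n).+1 = F x 1.
    by rewrite F1 /F -addSn -G_sum /G iterS Hn2.
  have hb : F (u n) 0 <= B * q x by rewrite -Hn2 q_iter; apply: hB.
  have : n%:R <= (n + n)%:R :> R by rewrite ler_nat; apply: leq_addr.
  move: (n%:R : R) ((n + n)%:R : R) (F x 0) (F x 1) (F (u n) 0) F0p c0 hb => a b f0 f1 fu F0p c0 hb.
  nra.
have hv : ip (P (x - W x)) (x - W x) = 0.
  have [i0 r0] := ge0_ReIm (hPpsd (x - W x)).
  apply: eq0_ReIm => //.
  rewrite exp_even -F0 -F1 -F2 in r0 *.
  lra.
have := psd_zero Plin hPpsd hPsa hv.
rewrite -(lin0 Plin) => /Pinj /eqP. rewrite subr_eq0 => /eqP. by [].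
Qed.

Lemma main_result :
  let W := J \o V in
  pos_inj ip P /\ hankel_dpos ip W (Vs \o J) P /\
  forall H0 H' : H -> Prop,
    closed_subspace ip H' ->
    (forall x, H0 x <-> orthocompl ip H' x) ->
    inv_sub W H0 -> inv_sub W H' ->
    pure_on W H0 -> onto_on W H' ->
    [/\ same_dim ip (wandering ip V (fun _ => True)) (wandering ip W H0),
        inv_sub P H0, inv_sub P H' &
        ((forall x, H' x -> W x = x) \/ (forall x, H' x -> x = 0))].
Proof.
move=> W'.
split; first by split; [exact: hPpsd | exact: Pinj].
split.
  split; first exact: hPpsd.
  split; move=> x /=; [exact: P_hankel | exact: PW_psd].
move=> H0 H' hH' hH0 WH0 WH' pure onto.
have fixH' := fixed_H' onto.
have hcomp : forall u, cauchy_seq ip u -> exists l, cvg_to ip u l.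
  by case: hH => _ [_ [_ [_ [hc _]]]].
have fixin : forall y, W y = y -> H' y.
  move=> y hy. have [a [Ha Hort]] := proj_thm hH' hcomp y.
  set b := y - a.
  have Hb0 : H0 b by apply/hH0 => h Hh; exact: Hort.
  have eyab : y = a + b by rewrite /b addrC subrK.
  have Wb0 : H0 (W b) := WH0 b Hb0.
  have Wa : H' (W a) := WH' a Ha.
  have ec : W b - b = a - W a.
    have e : W a + W b = a + b by rewrite -(linD Wlin) -eyab hy.
    by rewrite -[W b](addKr (W a)) e addrA addrK addrC.
  have Hc' : H' (a - W a).
    have := sub_comb hH' (-1) Wa Ha. by rewrite scaleN1r addrC.
  have Hc0 : H0 (W b - b).
    apply/hH0 => h Hh. by rewrite ipBl ((hH0 _).1 Wb0 h Hh) ((hH0 _).1 Hb0 h Hh) subrr.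
  have Wbb : W b = b.
    apply/eqP; rewrite -subr_eq0; apply/eqP; apply: ip_eq0.
    apply: ((hH0 _).1 Hc0). by rewrite ec.
  have b0 : b = 0.
    apply: pure => n. exists b; split => //.
    elim: n => //= n IH. by rewrite -IH -{1}Wbb.
  by rewrite eyab b0 addr0.
have PH' : inv_sub P H'.
  move=> x Hx. apply: fixin. apply: fixP. by rewrite P_hankel fixH'.
split.
- exists J; split.
  + exact: Jlin.
  + move=> x [_ hx]. split.
      apply/hH0 => h Hh. have [u [Hu <-]] := onto h Hh.
      by rewrite /W' /= Jiso; exact: hx.
    move=> z Hz. by rewrite /W' /= Jiso; exact: hx.
  + move=> x y _ _; exact: Jiso.
  + move=> y [Hy0 hy]. exists (J y); split; last exact: JJ.
    split => // z _.
    set v := Vs (J y).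
    have key : forall z, ip (J y) (V z) = (ip z v)^*%C by move=> z'; rewrite ipC hVs.
    have Hv0 : H0 v.
      apply/hH0 => h Hh.
      rewrite ipC /v -hVs -hJsa ipC ((hH0 y).1 Hy0 _ (WH' h Hh)).
      by rewrite !conjc0.
    have : ip y (J (V v)) = 0 := hy v Hv0.
    rewrite -hJsa key => /eqP. rewrite conjc_eq0 => /eqP /ip_eq0 v0.
    by rewrite key v0 ip0r conjc0.
- move=> x Hx0. apply/hH0 => h Hh. rewrite hPsa. exact: (hH0 x).1 Hx0 _ (PH' h Hh).
- exact: PH'.
- left; exact: fixH'.
Qed.
End Main.

End Hilb.

Unset Implicit Arguments.

Theorem theoremC (R : realType) (H : lmodType R[i]) (ip : H -> H -> R[i])
  (hH : is_sep_hilbert ip)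
  (A V Vs : H -> H)
  (hA : bounded_op ip A) (hAsa : selfadjoint ip A) (hAinj : injective A)
  (hV : isom_op ip V) (hVs : is_adjoint ip V Vs)
  (hVpure : pure_on V (fun _ => True))
  (hAhank : hankel V Vs A)
  (hAV : pos_inj ip (A \o V))
  (P J : H -> H)
  (hP : bounded_op ip P) (hPsa : selfadjoint ip P) (hPpsd : psd ip P)
  (hPsq : forall x, P (P x) = A (A x))
  (hJ : unitary_op ip J) (hJsa : selfadjoint ip J)
  (hAJP : forall x, A x = J (P x)) :
  let W := J \o V in
  pos_inj ip P /\ hankel_dpos ip W (Vs \o J) P /\
  forall H0 H' : H -> Prop,
    closed_subspace ip H' ->
    (forall x, H0 x <-> orthocompl ip H' x) ->
    inv_sub W H0 -> inv_sub W H' ->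
    pure_on W H0 -> onto_on W H' ->
    [/\ same_dim ip (wandering ip V (fun _ => True)) (wandering ip W H0),
        inv_sub P H0, inv_sub P H' &
        ((forall x, H' x -> W x = x) \/ (forall x, H' x -> x = 0))].
Proof.
exact: (main_result hH hAsa hAinj hV hVs hAhank hAV hP hPsa hPpsd hPsq hJ hJsa hAJP).
Qed.
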